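(* Let $d\in\mathbb{N}$, let $x_1^*$ denote the smallest zero of the Legendre polynomial $P_{d+1}(x)$, and define $z^*=\arccos|x_1^*|$. If $z>z^*$, then there exists no design on the rectangle $[z,\pi-z]\times(-\pi,\pi]$ whose information matrix in the spherical harmonic regression model of degree $d$ equals $I_{(d+1)^2}$.
   Context: Spherical harmonic functions: for $n\in\mathbb{N}_0$, $Y_n^0(\theta,\phi)=\sqrt{2n+1}\,P_n(\cos\theta)$ with $P_n$ the $n$-th Legendre polynomial (orthogonal w.r.t. Lebesgue measure on $[-1,1]$, $P_n(1)=1$); for $1\le m\le n$, $Y_n^m(\theta,\phi)=\sqrt{2(2n+1)\frac{(n-m)!}{(n+m)!}}\,P_n^m(\cos\theta)\cos(m\phi)$ and $Y_n^{-m}(\theta,\phi)=\sqrt{2(2n+1)\frac{(n-m)!}{(n+m)!}}\,P_n^m(\cos\theta)\sin(m\phi)$, where $P_n^m(x)=(-1)^m(1-x^2)^{m/2}\frac{d^m}{dx^m}P_n(x)$. The spherical harmonic regression model of degree $d$ has regression vector $f_d=(Y_0^0,Y_1^{-1},Y_1^0,Y_1^1,\dots,Y_d^{-d},\dots,Y_d^d)^T\in\mathbb{R}^{(d+1)^2}$. A design is a probability measure $\xi$ on $[0,\pi]\times(-\pi,\pi]$ (a design on a subset means one supported in that subset), with information matrix $M(\xi)=\int f_df_d^T\,d\xi$. *)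

(* Defs.v *)
From HB Require Import structures.
From mathcomp Require Import all_boot all_order all_algebra.
From mathcomp Require Import all_classical all_reals all_analysis.
Set Implicit Arguments. Unset Strict Implicit. Unset Printing Implicit Defensive.
Import Order.TTheory GRing.Theory Num.Theory.
Import numFieldNormedType.Exports.
Local Open Scope classical_set_scope.
Local Open Scope ring_scope.

Section SphericalHarmonics.
Variable R : realType.

Definition Legendre (n : nat) : {poly R} :=
  ((2 ^+ n * (n`!)%:R)^-1) *: ((('X ^+ 2 - 1) ^+ n)^`(n)).

Definition assocLegendre (n m : nat) (x : R) : R :=
  (-1) ^+ m * (Num.sqrt (1 - x ^+ 2)) ^+ m * ((Legendre n)^`(m)).[x].

Definition Ynm (n : nat) (m : int) (p : R * R) : R :=
  let th := p.1 in let ph := p.2 in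
  let k := `|m|%N in
  let c := Num.sqrt (2 * (2 * n%:R + 1) * ((n - k)`!)%:R / ((n + k)`!)%:R) in
  if m == 0 then Num.sqrt (2 * n%:R + 1) * (Legendre n).[cos th]
  else if (0 < m)%R then c * assocLegendre n k (cos th) * cos (k%:R * ph)
  else c * assocLegendre n k (cos th) * sin (k%:R * ph).

(* Index k in {0,..,(d+1)^2-1} of f_d corresponds to (n, m) with
   n^2 <= k < (n+1)^2 and m = k - n^2 - n, i.e. the ordering
   Y_0^0, Y_1^{-1}, Y_1^0, Y_1^1, ..., Y_d^{-d}, ..., Y_d^d. *)
Definition idx_n (d k : nat) : nat := (\max_(n < d.+1 | n ^ 2 <= k) n)%N.
Definition idx_m (d k : nat) : int := k%:Z - (idx_n d k ^ 2 + idx_n d k)%N%:Z.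

Definition fvec (d : nat) (k : 'I_((d.+1) ^ 2)) : R * R -> R :=
  Ynm (idx_n d k) (idx_m d k).

Definition info_matrix (d : nat) (xi : probability (R * R)%type R)
  : 'M[R]_((d.+1) ^ 2) :=
  \matrix_(i, j) Rintegral xi setT (fun p => fvec i p * fvec j p).

Definition rect (z : R) : set (R * R) :=
  [set p | z <= p.1 <= pi - z] `&` [set p | - pi < p.2 <= pi].

Definition design_on (A : set (R * R)) (xi : probability (R * R)%type R) : Prop :=
  xi A = 1%E.

End SphericalHarmonics.

(* Main.v *)
Require Import Defs.
From HB Require Import structures.
From mathcomp Require Import all_boot all_order all_algebra.
From mathcomp Require Import all_classical all_reals all_analysis.
From mathcomp Require Import measurable_realfun ring lra zify.
Import Order.TTheory GRing.Theory Num.Theory.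
Import numFieldNormedType.Exports.
Local Open Scope ring_scope.
Set Implicit Arguments. Unset Strict Implicit. Unset Printing Implicit Defensive.

Section Alg.
Variable R : realFieldType.

Definition linF (F : {poly R} -> R) := forall a p q, F (a *: p + q) = a * F p + F q.

Lemma linF0 F : linF F -> F 0 = 0.
Proof.
move=> h; have := h 1 0 0; rewrite scaler0 addr0 mul1r.
by move/(congr1 (fun x => x - F 0)); rewrite subrr addrK.
Qed.

Lemma linFD F : linF F -> forall p q, F (p + q) = F p + F q.
Proof. by move=> h p q; rewrite -[p]scale1r h mul1r scale1r. Qed.

Lemma linFZ F : linF F -> forall a p, F (a *: p) = a * F p.
Proof. by move=> h a p; rewrite -[a *: p]addr0 h linF0 ?addr0. Qed.

Lemma linFN F : linF F -> forall p, F (- p) = - F p.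
Proof. by move=> h p; rewrite -scaleN1r linFZ // mulN1r. Qed.

Lemma linFB F : linF F -> forall p q, F (p - q) = F p - F q.
Proof. by move=> h p q; rewrite linFD // linFN. Qed.

Lemma linF_sum F (I : Type) (s : seq I) (P : pred I) (G : I -> {poly R}) :
  linF F -> F (\sum_(i <- s | P i) G i) = \sum_(i <- s | P i) F (G i).
Proof.
move=> h; elim/big_rec2: _ => [|i y p _ <-]; first exact: linF0.
by rewrite linFD.
Qed.

Definition mI (i : nat) : R := (1 - (-1) ^+ i.+1) / i.+1%:R.
Definition Ip (p : {poly R}) : R := \sum_(i < size p) p`_i * mI i.

Lemma IpE N (p : {poly R}) : (size p <= N)%N -> Ip p = \sum_(i < N) p`_i * mI i.
Proof.
move=> hN; rewrite /Ip -(subnKC hN) big_split_ord /=.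
rewrite [X in _ = _ + X]big1 ?addr0 // => i _.
by rewrite nth_default ?mul0r // leq_addr.
Qed.

Lemma Ip_lin : linF Ip.
Proof.
move=> a p q.
set N := maxn (size (a *: p + q)) (maxn (size p) (size q)).
rewrite (@IpE N) ?leq_maxl // (@IpE N p); last by rewrite /N !leq_max leqnn orbT.
rewrite (@IpE N q); last by rewrite /N !leq_max leqnn !orbT.
rewrite big_distrr -big_split /=; apply: eq_bigr => i _.
by rewrite coefD coefZ mulrDl mulrA.
Qed.

Lemma Ip_deriv u : Ip u^`() = u.[1] - u.[-1].
Proof.
rewrite !horner_coef -sumrB.
case hs: (size u) => [|n].
  by rewrite big_ord0 /Ip big1 // => i _; rewrite coef_deriv nth_default ?mul0rn ?mul0r // hs.
rewrite (@IpE n.+1); last first.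
  apply/leq_sizeP => j hj; rewrite coef_deriv nth_default ?mul0rn // hs; exact: leqW.
rewrite big_ord_recr /= coef_deriv (nth_default 0 (_ : size u <= n.+1)%N) ?hs //.
rewrite mul0rn mul0r addr0 big_ord_recl /= !expr0 subrr add0r.
apply: eq_bigr => i _; rewrite coef_deriv /mI /bump /= expr1n add1n -mulrBr.
rewrite -[u`_i.+1 *+ i.+1]mulr_natr -mulrA; congr (_ * _).
by rewrite mulrCA mulfV ?mulr1 // pnatr_eq0.
Qed.


Lemma IBP p q : Ip (p^`() * q) = (p * q).[1] - (p * q).[-1] - Ip (p * q^`()).
Proof. by rewrite -Ip_deriv derivM (linFD Ip_lin) addrK. Qed.

Definition Qp : {poly R} := 'X ^+ 2 - 1.
Definition wp n : {poly R} := Qp ^+ n.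

Lemma Qp1 : Qp.[1] = 0. Proof. by rewrite /Qp !hornerE expr1n subrr. Qed.
Lemma QpN1 : Qp.[-1] = 0. Proof. by rewrite /Qp !hornerE sqrrN expr1n subrr. Qed.

Lemma wfac n k : (k <= n)%N -> exists s, (wp n)^`(k) = Qp ^+ (n - k) * s.
Proof.
elim: k => [|k IH] hk.
  by exists 1; rewrite subn0 mulr1 derivn0.
have [s hs] := IH (ltnW hk).
set m := (n - k.+1)%N.
have e : (n - k = m.+1)%N by rewrite /m subnSK.
rewrite e in hs.
exists (Qp^`() * s *+ m.+1 + Qp * s^`()).
clearbody m.
rewrite derivnS hs derivM deriv_exp /= exprS.
move: (Qp^`()) (s^`()) => A B; move: Qp => C.
ring.
Qed.

Lemma wbd n k : (k < n)%N -> (wp n)^`(k).[1] = 0 /\ (wp n)^`(k).[-1] = 0.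
Proof.
move=> hk; have [s ->] := wfac (ltnW hk).
have : (0 < n - k)%N by rewrite subn_gt0.
case: (n - k)%N => // m _.
by rewrite !hornerM !horner_exp Qp1 QpN1 !expr0n /= !mul0r.
Qed.

Lemma ortho_gen n j (q : {poly R}) : (j <= n)%N -> (size q <= j)%N -> Ip (q * (wp n)^`(j)) = 0.
Proof.
elim: j q => [|j IH] q hj hq.
  by move: hq; rewrite leqn0 size_poly_eq0 => /eqP ->; rewrite mul0r (linF0 Ip_lin).
rewrite derivnS mulrC IBP.
have [h1 h2] := wbd hj.
rewrite !hornerM h1 h2 !mul0r subrr sub0r mulrC IH ?oppr0 //; first exact: ltnW.
have [->|q0] := eqVneq q 0; first by rewrite deriv0 size_poly0.
by rewrite -ltnS; exact: leq_trans (lt_size_deriv q0) hq.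
Qed.

Lemma xpow_gen n j : (j <= n)%N ->
  Ip ('X^j * (wp n)^`(j)) = (-1) ^+ j * j`!%:R * Ip (wp n).
Proof.
elim: j => [|j IH] hj; first by rewrite !expr0 !mul1r derivn0.
rewrite derivnS mulrC IBP.
have [h1 h2] := wbd hj.
rewrite !hornerM h1 h2 !mul0r subrr sub0r derivXn /= mulrnAr -scaler_nat.
rewrite (linFZ Ip_lin) [_ * 'X^j]mulrC IH; last exact: ltnW.
by rewrite factS natrM exprS; ring.
Qed.

Lemma derQp : Qp^`() = 'X *+ 2.
Proof. by rewrite /Qp derivB derivXn -polyC1 derivC subr0. Qed.

Lemma wp_bd n : (wp n.+1).[1] = 0 /\ (wp n.+1).[-1] = 0.
Proof. by rewrite /wp !horner_exp Qp1 QpN1 !expr0n. Qed.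

Lemma J_rec n : Ip (wp n.+1) * (2 * n%:R + 3) = - (2 * n%:R + 2) * Ip (wp n).
Proof.
have h : Ip (wp n.+1) = - (2 * n.+1%:R) * (Ip (wp n.+1) + Ip (wp n)).
  rewrite -{1}[wp n.+1]mul1r -derivX IBP.
  have [h1 h2] := wp_bd n.
  rewrite !hornerM h1 h2 !mulr0 subrr sub0r.
  have -> : 'X * (wp n.+1)^`() = (2 * n.+1%:R) *: (wp n.+1 + wp n).
    rewrite /wp deriv_exp derQp /= -mul_polyC rmorphM /= rmorph_nat /= exprS.
    move: (Qp ^+ n) => T; rewrite /Qp; move: ('X : {poly R}) => X.
    ring.
  by rewrite (linFZ Ip_lin) (linFD Ip_lin) mulNr.
have -> : 2 * n%:R + 3 = 1 + 2 * n.+1%:R :> R by rewrite -[n.+1]addn1 natrD; ring.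
have -> : 2 * n%:R + 2 = 2 * n.+1%:R :> R by rewrite -[n.+1]addn1 natrD; ring.
move: h; move: (Ip (wp n.+1)) (Ip (wp n)) => a b h.
by rewrite mulrDr mulr1 {1}h; ring.
Qed.

Definition cL n : R := (2 ^+ n * (n`!)%:R)^-1.
Definition Leg n : {poly R} := cL n *: (wp n)^`(n).

Lemma Qp_monic : Qp \is monic.
Proof. by rewrite /Qp -polyC1 monicXnsubC. Qed.

Lemma size_Qp : size Qp = 3%N.
Proof. by rewrite /Qp -polyC1 size_XnsubC. Qed.

Lemma size_wp n : size (wp n) = (n + n).+1.
Proof.
have h := size_exp Qp n; rewrite size_Qp /= in h.
have hn : wp n != 0 by apply: monic_neq0; exact: monic_exp Qp_monic.
move: h hn; rewrite /wp -size_poly_eq0.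
by case: (size _) => // m /= ->; rewrite mul2n addnn.
Qed.

Lemma coef_wp_top n : (wp n)`_(n + n) = 1.
Proof.
have := monic_exp n Qp_monic; rewrite monicE lead_coefE -/(wp n) size_wp /=.
by move/eqP.
Qed.

Lemma coef_Leg n j : (Leg n)`_j = cL n * ((wp n)`_(n + j) *+ (n + j) ^_ n).
Proof. by rewrite /Leg coefZ coef_derivn. Qed.

Lemma coef_Leg_hi n j : (n < j)%N -> (Leg n)`_j = 0.
Proof.
move=> hj; rewrite coef_Leg nth_default ?mul0rn ?mulr0 //.
by rewrite size_wp ltn_add2l.
Qed.

Lemma size_Leg n : (size (Leg n) <= n.+1)%N.
Proof. by apply/leq_sizeP => j hj; apply: coef_Leg_hi. Qed.

Lemma cL_neq0 n : cL n != 0.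
Proof.
by rewrite /cL invr_eq0 mulf_neq0 ?expf_neq0 ?pnatr_eq0 -?lt0n ?fact_gt0.
Qed.

Lemma coef_Leg_n n : (Leg n)`_n = cL n * ((n + n) ^_ n)%:R.
Proof. by rewrite coef_Leg coef_wp_top. Qed.

Lemma coef_Leg_n_neq0 n : (Leg n)`_n != 0.
Proof.
rewrite coef_Leg_n mulf_neq0 ?cL_neq0 // pnatr_eq0 -lt0n ffact_gt0.
exact: leq_addr.
Qed.

Lemma Leg_neq0 n : Leg n != 0.
Proof. by apply/eqP => h; move: (coef_Leg_n_neq0 n); rewrite h coef0 eqxx. Qed.

Lemma Leg_ortho n (q : {poly R}) : (size q <= n)%N -> Ip (q * Leg n) = 0.
Proof.
by move=> hq; rewrite /Leg -scalerAr (linFZ Ip_lin) ortho_gen // mulr0.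
Qed.

Lemma Ip1 : Ip 1 = 2.
Proof.
by rewrite /Ip size_poly1 big_ord1 coef1 mul1r /mI expr1 opprK divr1.
Qed.

Lemma Kn n : cL n ^+ 2 * ((n + n)`!)%:R * (-1) ^+ n * Ip (wp n) = 2 / (2 * n%:R + 1).
Proof.
elim: n => [|n IH].
  by rewrite /cL /wp !expr0 addn0 fact0 Ip1; field.
have hc : cL n.+1 = cL n / (2 * n.+1%:R).
  have f0 : (n`!)%:R != 0 :> R by rewrite pnatr_eq0 -lt0n fact_gt0.
  have t0 : 2 ^+ n != 0 :> R by rewrite expf_neq0 // pnatr_eq0.
  have e3 : n.+1%:R != 0 :> R by rewrite pnatr_eq0.
  rewrite /cL factS natrM exprS; field.
  by rewrite f0 t0 addrC natr1 pnatr_eq0.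
have hf : ((n.+1 + n.+1)`!)%:R = (2 * n%:R + 2) * (2 * n%:R + 1) * ((n + n)`!)%:R :> R.
  rewrite addnS addSn !factS !natrM -!natr1 natrD; ring.
have hJ := J_rec n.
have e1 : 2 * n%:R + 3 != 0 :> R.
  by rewrite -natrM -natrD pnatr_eq0 addn3.
have e2 : 2 * n%:R + 1 != 0 :> R.
  by rewrite -natrM natr1 pnatr_eq0.
have e3 : n.+1%:R != 0 :> R by rewrite pnatr_eq0.
have hJ' : Ip (wp n.+1) = - (2 * n%:R + 2) * Ip (wp n) / (2 * n%:R + 3).
  by rewrite -hJ mulfK.
have e4 : n%:R + 1 != 0 :> R by rewrite natr1 pnatr_eq0.
rewrite hc hf hJ' exprS -[n.+1%:R]natr1 [(-1) ^+ n.+1]exprS.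
move: IH e1 e2 e4; move: (cL n) (Ip (wp n)) (((n + n)`!)%:R : R) (n%:R : R) ((-1) ^+ n : R).
move=> c J F N sg IH e1 e2 e4.
rewrite (_ : 2 * (N + 1) + 1 = 2 * N + 3); last by ring.
transitivity ((c ^+ 2 * F * sg * J) * ((2 * N + 1) / (2 * N + 3))).
  by field; rewrite e4 e1.
by rewrite IH; field; rewrite e1 e2.
Qed.


Lemma Leg_norm n : Ip (Leg n * Leg n) = 2 / (2 * n%:R + 1).
Proof.
set a := (Leg n)`_n.
have hr : (size (Leg n - a *: 'X^n)%R <= n)%N.
  apply/leq_sizeP => j; rewrite leq_eqVlt => /orP[/eqP <-|hj].
    by rewrite coefB [(_ *: 'X^n)`__]coefZ coefXn eqxx mulr1 subrr.
  by rewrite coefB [(_ *: 'X^n)`__]coefZ coefXn coef_Leg_hi // gtn_eqF // mulr0 subrr.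
have -> : Leg n * Leg n = Leg n * (a *: 'X^n) + Leg n * (Leg n - a *: 'X^n).
  by rewrite -mulrDr addrC subrK.
rewrite (linFD Ip_lin) [Leg n * (Leg n - _)]mulrC Leg_ortho // addr0.
rewrite -scalerAr (linFZ Ip_lin) mulrC [Leg n * _]mulrC {1}/Leg -scalerAr (linFZ Ip_lin) xpow_gen //.
rewrite /a coef_Leg_n -Kn.
have -> : ((n + n)`!)%:R = ((n + n) ^_ n)%:R * (n`!)%:R :> R.
  by rewrite -natrM -(ffact_fact (leq_addr n n)) addnK.
move: (cL n) ((-1) ^+ n : R) (Ip (wp n)) => c sg J.
ring.
Qed.

Lemma Ip_LL n m : Ip (Leg n * Leg m) = if n == m then 2 / (2 * n%:R + 1) else 0.
Proof.
case: eqP => [<-|/eqP hnm]; first exact: Leg_norm.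
case: (ltngtP n m) hnm => // h _.
  by rewrite Leg_ortho // (leq_trans (size_Leg n)).
by rewrite mulrC Leg_ortho // (leq_trans (size_Leg m)).
Qed.

Lemma expand N (p : {poly R}) : (size p <= N)%N ->
  exists b : nat -> R, p = \sum_(i < N) b i *: Leg i.
Proof.
elim: N p => [|N IH] p hp.
  by exists (fun _ => 0); move: hp; rewrite leqn0 size_poly_eq0 big_ord0 => /eqP.
set c := p`_N / (Leg N)`_N.
have hs : (size (p - c *: Leg N)%R <= N)%N.
  apply/leq_sizeP => j; rewrite leq_eqVlt => /orP[/eqP <-|hj].
    by rewrite coefB coefZ /c divfK ?coef_Leg_n_neq0 // subrr.
  rewrite coefB coefZ coef_Leg_hi // mulr0 subr0.
  by apply/(leq_sizeP _ _ hp).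
have [b hb] := IH _ hs.
exists (fun i => if i == N then c else b i).
rewrite big_ord_recr /= eqxx.
rewrite (eq_bigr (fun i : 'I_N => b i *: Leg i)); last first.
  by move=> i _; rewrite ltn_eqF.
by rewrite -hb subrK.
Qed.

Lemma bilin F N (k : nat -> R) (b e : nat -> R) : linF F ->
  (forall n m, (n < N)%N -> (m < N)%N -> F (Leg n * Leg m) = if n == m then k n else 0) ->
  F ((\sum_(i < N) b i *: Leg i) * (\sum_(i < N) e i *: Leg i)) =
  \sum_(i < N) b i * e i * k i.
Proof.
move=> hF hk; rewrite mulr_suml (linF_sum _ _ _ hF); apply: eq_bigr => i _.
rewrite mulr_sumr (linF_sum _ _ _ hF).
rewrite (bigD1 i) //= big1 ?addr0.
  by rewrite -scalerAl -scalerAr !(linFZ hF) hk // eqxx mulrA.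
move=> j hj; rewrite -scalerAl -scalerAr !(linFZ hF) hk //.
by rewrite (negbTE (_ : (i : nat) != j)) ?mulr0 //; apply: contra hj => /eqP h; apply/eqP/val_inj.
Qed.

Lemma key F d (x1 : R) (r : {poly R}) : linF F ->
  (forall n m, (n <= d)%N -> (m <= d)%N ->
     F (Leg n * Leg m) = if n == m then (2 * n%:R + 1)^-1 else 0) ->
  Leg d.+1 = r * ('X ^+ 2 - (x1 ^+ 2)%:P) ->
  F (r * r * ('X ^+ 2 - (x1 ^+ 2)%:P)) = 0 /\ 0 < F (r * r).
Proof.
move=> hF hk hL.
have r0 : r != 0 by apply/eqP => r0; move: (Leg_neq0 d.+1); rewrite hL r0 mul0r eqxx.
have hm : 'X ^+ 2 - (x1 ^+ 2)%:P \is monic by rewrite monicXnsubC.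
have hsr : (size r <= d)%N.
  have := size_Leg d.+1; rewrite hL size_Mmonic // size_XnsubC //.
  by rewrite addn3 /= !ltnS.
have hsX : (size ('X * r)%R <= d.+1)%N.
  by rewrite mulrC size_mulX // ltnS.
have [b hb] := expand (leq_trans hsr (leqnSn d)).
have [e he] := expand hsX.
have hk' : forall n m, (n < d.+1)%N -> (m < d.+1)%N ->
   F (Leg n * Leg m) = if n == m then (2 * n%:R + 1)^-1 else 0.
  by move=> n m; rewrite !ltnS; apply: hk.
have hI : forall n m, (n < d.+1)%N -> (m < d.+1)%N ->
   Ip (Leg n * Leg m) = if n == m then 2 / (2 * n%:R + 1) else 0.
  by move=> n m _ _; apply: Ip_LL.
have hid : r * r * ('X ^+ 2 - (x1 ^+ 2)%:P) = ('X * r) * ('X * r) - x1 ^+ 2 *: (r * r).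
  rewrite -mul_polyC; move: ((x1 ^+ 2)%:P) ('X : {poly R}) => c X; ring.
split.
  have h0 : Ip (r * r * ('X ^+ 2 - (x1 ^+ 2)%:P)) = 0.
    by rewrite -mulrA -hL Leg_ortho // (leq_trans hsr).
  have E1 : F ('X * r * ('X * r)) = \sum_(i < d.+1) e i * e i * (2 * i%:R + 1)^-1.
    by rewrite he; apply: (bilin _ _ hF hk').
  have E2 : F (r * r) = \sum_(i < d.+1) b i * b i * (2 * i%:R + 1)^-1.
    by rewrite hb; apply: (bilin _ _ hF hk').
  have E3 : Ip ('X * r * ('X * r)) = 2 * \sum_(i < d.+1) e i * e i * (2 * i%:R + 1)^-1.
    rewrite he (bilin _ _ Ip_lin hI) mulr_sumr; apply: eq_bigr => i _; ring.
  have E4 : Ip (r * r) = 2 * \sum_(i < d.+1) b i * b i * (2 * i%:R + 1)^-1.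
    rewrite hb (bilin _ _ Ip_lin hI) mulr_sumr; apply: eq_bigr => i _; ring.
  move: h0; rewrite hid (linFB Ip_lin) (linFB hF) (linFZ Ip_lin) (linFZ hF) E1 E2 E3 E4.
  rewrite mulrCA -mulrBr => /eqP; rewrite mulf_eq0 pnatr_eq0 /= => /eqP.
  by [].
rewrite hb (bilin _ _ hF hk').
have [i hi] : exists i : 'I_d.+1, b i != 0.
  apply/existsP; apply: contraT; rewrite negb_exists => /forallP h.
  move: r0; rewrite hb big1 ?eqxx // => i _.
  by move: (h i); rewrite negbK => /eqP ->; rewrite scale0r.
have h2 : forall j : nat, 0 < 2 * j%:R + 1 :> R by move=> j; rewrite -natrM natr1 ltr0n.
have pos : forall j : 'I_d.+1, 0 <= b j * b j * (2 * j%:R + 1)^-1.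
  by move=> j; apply: mulr_ge0; [by rewrite -expr2 sqr_ge0 | by rewrite invr_ge0 ltW].
rewrite (bigD1 i) //=; apply: (@lt_le_trans _ _ (b i * b i * (2 * i%:R + 1)^-1)); last first.
  by rewrite lerDl; apply: sumr_ge0 => j _; apply: pos.
apply: mulr_gt0; last by rewrite invr_gt0.
by rewrite lt0r -expr2 sqr_ge0 expf_neq0.
Qed.

Lemma wp_comp n : wp n \Po (- 'X) = wp n.
Proof.
by rewrite /wp /Qp rmorphXn rmorphB /= rmorphXn /= comp_polyX rmorph1 sqrrN.
Qed.

Lemma derivn_comp n k : ((wp n)^`(k)) \Po (- 'X) = (-1) ^+ k *: (wp n)^`(k).
Proof.
elim: k => [|k IH]; first by rewrite derivn0 wp_comp expr0 scale1r.
have h := deriv_comp ((wp n)^`(k)) (- 'X).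
rewrite derivN derivX IH derivZ mulrN1 in h.
rewrite derivnS; apply: oppr_inj; rewrite -h.
by rewrite exprS mulN1r scaleNr opprK.
Qed.

Lemma Leg_sym n x : (Leg n).[- x] = (-1) ^+ n * (Leg n).[x].
Proof.
have : (Leg n \Po (- 'X)).[x] = (Leg n).[- x] by rewrite horner_comp !hornerE.
rewrite /Leg comp_polyZ derivn_comp scalerA hornerZ => <-.
by rewrite hornerZ mulrCA mulrA.
Qed.

Lemma factor2 (p : {poly R}) a : root p a -> root p (- a) -> a != 0 ->
  exists r, p = r * ('X ^+ 2 - (a ^+ 2)%:P).
Proof.
move=> /factor_theorem [q hq] hr a0.
have : root q (- a).
  move: hr; rewrite hq rootE hornerM !hornerE mulf_eq0 => /orP[//|].
  by rewrite -opprD oppr_eq0 -mulr2n mulrn_eq0 /= (negbTE a0).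
move=> /factor_theorem [r hr']; exists r.
rewrite hq hr' -mulrA; congr (_ * _).
rewrite polyCN rmorphXn /=; move: (a%:P) ('X : {poly R}) => A X; ring.
Qed.
End Alg.

Local Open Scope classical_set_scope.
Local Open Scope ring_scope.

Lemma LegE (R : realType) n : Legendre R n = @Leg R n.
Proof. by []. Qed.

Lemma horner_bound (R : realType) (p : {poly R}) (x : R) : `|x| <= 1 ->
  `|p.[x]| <= \sum_(i < size p) `|p`_i|.
Proof.
move=> hx; rewrite horner_coef; apply: (le_trans (ler_norm_sum _ _ _)).
apply: ler_sum => i _; rewrite normrM normrX.
by apply: ler_piMr => //; apply: exprn_ile1.
Qed.

Lemma mfun_p (R : realType) (p : {poly R}) :
  measurable_fun setT (fun q : R * R => p.[cos q.1]).
Proof.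
apply: (@measurableT_comp _ _ _ _ _ _ (horner p) _ (fun q : R * R => cos q.1)).
  exact: continuous_measurable_fun (@continuous_horner R p).
apply: (@measurableT_comp _ _ _ _ _ _ cos _ fst).
  exact: continuous_measurable_fun (@continuous_cos R).
exact: measurable_fst.
Qed.

Lemma integ_p (R : realType) (xi : probability (R * R)%type R) (p : {poly R}) :
  xi.-integrable setT (EFin \o (fun q : R * R => p.[cos q.1])).
Proof.
apply: measurable_bounded_integrable => //.
- apply: (@le_lt_trans _ _ 1%E); last exact: ltry.
  by rewrite (le_eqVlt _ 1%E) -(probability_setT xi) eqxx.
- exact: mfun_p.
exists (\sum_(i < size p) `|p`_i|); split; first exact: num_real.
move=> M hM q _ /=; apply: (le_trans _ (ltW hM)); apply: horner_bound.
exact: cos_max.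
Qed.

Definition Lx (R : realType) (xi : probability (R * R)%type R) (p : {poly R}) : R :=
  Rintegral xi setT (fun q => p.[cos q.1]).

Lemma Lx_lin (R : realType) (xi : probability (R * R)%type R) : linF (Lx xi).
Proof.
move=> a p q; rewrite /Lx.
under eq_Rintegral do rewrite hornerD.
rewrite RintegralD //; [|exact: integ_p|exact: integ_p].
under eq_Rintegral do rewrite hornerZ.
by rewrite RintegralZl //; exact: integ_p.
Qed.

Lemma Lx_ge0 (R : realType) (xi : probability (R * R)%type R) (A : set (R * R)) p :
  measurable A -> xi A = 1%E -> (forall q, A q -> 0 <= p.[cos q.1]) -> 0 <= Lx xi p.
Proof.
move=> mA hA hp; rewrite /Lx /Rintegral.
have hC : xi (~` A) = 0%E by rewrite probability_setC // hA subee.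
rewrite (negligible_integral (measurableC mA) _ _ hC) //; last exact: integ_p.
apply: fine_ge0; apply: integral_ge0 => q [_ /=]; rewrite lee_fin.
by move=> /contrapT; apply: hp.
Qed.


Lemma nat_a1 n i : (i ^ 2 <= n ^ 2 + n)%N -> (i <= n)%N.
Proof. nia. Qed.
Lemma nat_a2 n d : (n <= d)%N -> (n ^ 2 + n < d.+1 ^ 2)%N.
Proof. nia. Qed.
Lemma nat_a3 n m : (n ^ 2 + n = m ^ 2 + m)%N -> n = m.
Proof. nia. Qed.

Lemma idx_n_eq d n : (n <= d)%N -> idx_n d (n ^ 2 + n) = n.
Proof.
move=> hn; rewrite /idx_n; apply/eqP; rewrite eqn_leq; apply/andP; split.
  by apply/bigmax_leqP => i hi; apply: nat_a1.
have hn' : (n < d.+1)%N by [].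
by apply: (@leq_bigmax_cond _ (fun i : 'I_d.+1 => (i ^ 2 <= n ^ 2 + n)%N) (fun i => nat_of_ord i) (Ordinal hn')) => /=; rewrite leq_addr.
Qed.

Lemma idx_m_eq d n : (n <= d)%N -> idx_m d (n ^ 2 + n) = 0.
Proof. by move=> hn; rewrite /idx_m idx_n_eq // subrr. Qed.

Definition kord d n (hn : (n <= d)%N) : 'I_(d.+1 ^ 2) := Ordinal (nat_a2 hn).

Lemma fvec_k (R : realType) d n (hn : (n <= d)%N) (p : R * R) :
  fvec (kord hn) p = Num.sqrt (2 * n%:R + 1) * (@Leg R n).[cos p.1].
Proof. by rewrite /fvec /= idx_n_eq // idx_m_eq // /Ynm eqxx. Qed.

Lemma entries (R : realType) d (xi : probability (R * R)%type R) n m :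
  (n <= d)%N -> (m <= d)%N -> info_matrix d xi = 1%:M ->
  Lx xi (@Leg R n * @Leg R m) = if n == m then (2 * n%:R + 1)^-1 else 0.
Proof.
move=> hn hm hM.
have := congr1 (fun M : 'M[R]_(d.+1 ^ 2) => M (kord hn) (kord hm)) hM.
rewrite /info_matrix !mxE /=.
under eq_Rintegral do rewrite !fvec_k.
set sn := Num.sqrt _; set sm := Num.sqrt _.
under eq_Rintegral do rewrite mulrACA -hornerM.
rewrite RintegralZl //; last exact: integ_p.
rewrite -/(Lx xi _).
have sn0 : 0 < sn by rewrite sqrtr_gt0 -natrM natr1 ltr0n.
have sm0 : 0 < sm by rewrite sqrtr_gt0 -natrM natr1 ltr0n.
case: (eqVneq n m) => [enm|nm].
  subst m.
  have -> : (kord hn == kord hm) = true by apply/eqP; apply: val_inj.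
  rewrite /sm -/sn /= => h.
  have -> : 2 * n%:R + 1 = sn * sn :> R.
    by rewrite -expr2 sqr_sqrtr // -natrM natr1 ler0n.
  have k : sn * sn != 0 by rewrite mulf_neq0 // gt_eqF.
  by apply: (mulfI k); rewrite mulfV // h.
have -> : (kord hn == kord hm) = false.
  apply/negbTE; apply: contra nm => /eqP [] /nat_a3 ->; exact: eqxx.
move=> /= /eqP; rewrite !mulf_eq0 (gt_eqF sn0) (gt_eqF sm0) /= => /eqP.
by [].
Qed.

Lemma rect_meas (R : realType) (z : R) : measurable (rect z).
Proof.
have -> : rect z = (`[z, pi - z]%classic `*` `]- pi, pi]%classic).
  apply/seteqP; split => -[a b]; rewrite /rect /= !in_itv //.
apply: measurableX; exact: measurable_itv.
Qed.

Lemma cos_le_mono (R : realType) (x y : R) : 0 <= x -> y <= pi -> x <= y -> cos y <= cos x.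
Proof.
move=> hx hy; rewrite le_eqVlt => /orP[/eqP ->//|h]; apply/ltW.
have hpi := @pi_gt0 R.
rewrite ltr_cos // in_itv /=; apply/andP; split => //; lra.
Qed.

Lemma cos_pi_sub (R : realType) (z : R) : cos (pi - z) = - cos z.
Proof. by rewrite cosB cospi sinpi mul0r addr0 mulN1r. Qed.

Lemma trig_bound (R : realType) (x1 z : R) (q0 : R * R) :
  acos `|x1| < z -> rect z q0 ->
  exists c : R, [/\ 0 <= c, c < `|x1| & forall q, rect z q -> cos q.1 ^+ 2 <= c ^+ 2].
Proof.
move=> hz [/andP [hq1 hq2] _].
have hpi := @pi_gt0 R.
have zpi2 : z <= pi / 2 by lra.
case: (lerP `|x1| 1) => hx.
  have hx' : -1 <= `|x1| <= 1 by apply/andP; split => //; apply: (le_trans _ (normr_ge0 _)); lra.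
  have ha0 := acos_ge0 hx'.
  have hapi := acos_lepi hx'.
  have hca : cos (acos `|x1|) = `|x1| by apply: acosK; rewrite in_itv.
  have z0 : 0 < z by lra.
  exists (cos z); split.
  - by apply: cos_ge0_pihalf; apply/andP; split; lra.
  - rewrite -[X in _ < X]hca ltr_cos // !in_itv /=; apply/andP; split; lra.
  move=> q [/andP [h1 h2] _].
  have u1 : cos q.1 <= cos z by apply: cos_le_mono => //; lra.
  have u2 : cos (pi - z) <= cos q.1 by apply: cos_le_mono => //; lra.
  rewrite cos_pi_sub in u2.
  nra.
exists 1; split => //.
move=> q _; rewrite expr1n; have := cos2Dsin2 q.1; have := sqr_ge0 (sin q.1); lra.
Qed.

Theorem theorem3p6 (R : realType) (d : nat) (x1 : R)
  (hroot : root (Legendre R d.+1) x1)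
  (hmin : forall r : R, root (Legendre R d.+1) r -> x1 <= r)
  (z : R) (hz : acos `|x1| < z) :
  ~ exists xi : probability (R * R)%type R,
      design_on (rect z) xi /\ info_matrix d xi = 1%:M.
Proof.
move=> [xi [hdes hM]].
have mR := rect_meas z.
have [q0 hq0] : exists q, rect z q.
  apply: contrapT => hne.
  have e : rect z = set0 by apply/seteqP; split => q // hq; apply: hne; exists q.
  move: hdes; rewrite /design_on e measure0 => -[] /esym/eqP.
  by rewrite oner_eq0.
have [c [c0 cx hc]] := trig_bound hz hq0.
have x10 : x1 != 0.
  by apply/eqP => h; move: cx; rewrite h normr0; apply/negP; rewrite -leNgt.
rewrite LegE in hroot.
have hroot' : root (@Leg R d.+1) (- x1).
  by move: hroot; rewrite !rootE Leg_sym => /eqP ->; rewrite mulr0.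
have [r hr] := factor2 hroot hroot' x10.
have [k0 kpos] := key (Lx_lin xi) (fun n m hn hm => entries hn hm hM) hr.
set Q := 'X ^+ 2 - (x1 ^+ 2)%:P in hr k0.
have := @Lx_ge0 R xi (rect z) ((c ^+ 2 - x1 ^+ 2) *: (r * r) - r * r * Q) mR hdes.
rewrite (linFB (Lx_lin xi)) (linFZ (Lx_lin xi)) k0 subr0.
have hcx : c ^+ 2 < x1 ^+ 2.
  by rewrite -[x1 ^+ 2]real_normK ?num_real // !expr2; apply: ltr_pM.
have hneg : (c ^+ 2 - x1 ^+ 2) * Lx xi (r * r) < 0 by nra.
move=> h; suff : 0 <= (c ^+ 2 - x1 ^+ 2) * Lx xi (r * r) by rewrite leNgt hneg.
apply: h => q hq.
have := hc q hq; rewrite /Q hornerD hornerN hornerZ !hornerM hornerD hornerN hornerXn hornerC.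
move: (cos q.1) => t ht.
rewrite (_ : forall a b e : R, a * (e * e) - e * e * b = (e * e) * (a - b)); last first.
  by move=> a b e; ring.
apply: mulr_ge0; first by rewrite -expr2 sqr_ge0.
lra.
Qed.
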